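(* Let $n$ and $0<\delta\le1$ be such that $\delta n/2$ and $n/2$ are integers, let $W=\{w_1,\dots,w_n\}$, $M=\{m_1,\dots,m_n\}$, and let $\bar x=(x^i_j)$, $\bar y=(y^i_j)$, $1\le i,j\le\delta n/2$, be bit arrays with $\mathrm{DISJ}(\bar x,\bar y)=1$. Then the marriage market with the preferences $P(\bar x,\bar y)$ described in the context has a unique stable marriage, namely $\mu_1=\{(m_i,w_{i+n/2}) : 1\le i\le n/2\}\cup\{(m_{i+n/2},w_i): 1\le i\le n/2\}$.
   Context: Participants are split into high ($w_1,\dots,w_{\delta n/2}$; $m_1,\dots,m_{\delta n/2}$), mid (indices $\delta n/2+1,\dots,n/2$) and low (indices $n/2+1,\dots,n$). Preferences $P(\bar x,\bar y)$: each low woman ranks $m_1\succ m_2\succ\dots\succ m_n$ and each low man ranks $w_1\succ\dots\succ w_n$. Each mid woman ranks $m_{n/2+1}\succ\dots\succ m_n\succ m_1\succ\dots\succ m_{n/2}$ (low, then high, then mid, each in index order), and mid men symmetrically over women. A high woman $w_i$ ranks, in order: the high men $m_j$ with $x^i_j=1$; then all low men; then all mid men; then the high men $m_j$ with $x^i_j=0$; within each group by increasing index. A high man $m_j$ ranks: high women $w_i$ with $y^i_j=1$; all low women; all mid women; high women $w_i$ with $y^i_j=0$; within each group by increasing index. All lists are full. A perfect marriage is stable if there is no pair $(w,m)$ each preferring the other to their spouse. $\mathrm{DISJ}(\bar x,\bar y)=1$ iff there is no $(i,j)$ with $x^i_j=y^i_j=1$. *)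

(* Defs.v *)
From mathcomp Require Import all_boot.
Set Implicit Arguments. Unset Strict Implicit. Unset Printing Implicit Defensive.

(* Conventions (0-based): n = h + h participants on each side, h = n/2,
   k = delta*n/2.  Woman w_{i+1} is index i : 'I_n, man m_{j+1} is index j.
   high: index < k ; mid: k <= index < h ; low: h <= index < n. *)

(* Bit arrays x, y : 'I_k -> 'I_k -> bool; x i j = x^{i+1}_{j+1}
   (first index = woman, second index = man). Read on nat, false out of range. *)
Definition bitat (k : nat) (x : 'I_k -> 'I_k -> bool) (i j : nat) : bool :=
  match @insub _ (fun t => t < k) _ i, @insub _ (fun t => t < k) _ j with
  | Some a, Some b => x a b
  | _, _ => false
  end.

Definition DISJ (k : nat) (x y : 'I_k -> 'I_k -> bool) : bool :=
  [forall i : 'I_k, forall j : 'I_k, ~~ (x i j && y i j)].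

(* Group rank (smaller = preferred) of man j in the list of woman i. *)
Definition wgroup (k h : nat) (x : 'I_k -> 'I_k -> bool) (i j : nat) : nat :=
  if h <= i then 0                                  (* low woman: m_1 > ... > m_n *)
  else if k <= i then
    (if h <= j then 0 else if j < k then 1 else 2)  (* low, high, mid *)
  else
    (if j < k then (if bitat x i j then 0 else 3)
     else if h <= j then 1 else 2).

(* Group rank of woman i in the list of man j (y^i_j: i woman, j man). *)
Definition mgroup (k h : nat) (y : 'I_k -> 'I_k -> bool) (j i : nat) : nat :=
  if h <= j then 0
  else if k <= j then
    (if h <= i then 0 else if i < k then 1 else 2)
  else
    (if i < k then (if bitat y i j then 0 else 3)
     else if h <= i then 1 else 2).

(* Position key: lexicographic (group, index); indices are < h + h. *)
Definition wkey (k h : nat) (x : 'I_k -> 'I_k -> bool) (i j : nat) : nat := @wgroup k h x i j * (h + h) + j.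
Definition mkey (k h : nat) (y : 'I_k -> 'I_k -> bool) (j i : nat) : nat := @mgroup k h y j i * (h + h) + i.

Definition wprefers (k h : nat) (x : 'I_k -> 'I_k -> bool) (i : 'I_(h + h)) (m m' : 'I_(h + h)) : bool :=
  @wkey k h x i m < @wkey k h x i m'.
Definition mprefers (k h : nat) (y : 'I_k -> 'I_k -> bool) (j : 'I_(h + h)) (w w' : 'I_(h + h)) : bool :=
  @mkey k h y j w < @mkey k h y j w'.

(* A perfect marriage is an injective (hence bijective) map mu : women -> men;
   mu w is the husband of w. *)
Definition stable (k h : nat) (x y : 'I_k -> 'I_k -> bool) (mu : 'I_(h + h) -> 'I_(h + h)) : Prop :=
  forall w w' : 'I_(h + h),
    ~ (@wprefers k h x w (mu w') (mu w) && @mprefers k h y (mu w') w w').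

Definition mu1 (h : nat) (w : 'I_(h + h)) : nat :=
  if w < h then w + h else w - h.

(* Main.v *)
Require Import Defs.
From mathcomp Require Import all_boot zify.
Set Implicit Arguments. Unset Strict Implicit.

Lemma key_cmp g g' a b N : a < N -> b < N ->
  (g * N + a < g' * N + b) = (g < g') || (g == g') && (a < b).
Proof.
move=> ha hb; case: (ltngtP g g') => H /=.
- apply/idP; have : g.+1 * N <= g' * N by rewrite leq_mul2r H orbT.
  rewrite mulSn; lia.
- apply/negbTE; rewrite -leqNgt; have : g'.+1 * N <= g * N by rewrite leq_mul2r H orbT.
  rewrite mulSn; lia.
- subst g'; rewrite ltn_add2l //.
Qed.

Lemma bitat_disj k (x y : 'I_k -> 'I_k -> bool) (hd : DISJ x y) i j :
  bitat x i j && bitat y i j = false.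
Proof.
rewrite /bitat; case: (insub i : option 'I_k) => [a|] //; case: (insub j : option 'I_k) => [b|] //.
by apply/negbTE; move/forallP: hd => /(_ a) /forallP /(_ b).
Qed.

Ltac dec := match goal with |- context[if ?b then _ else _] =>
  let H := fresh "H" in case H: b; try (exfalso; lia) end.
Ltac crush := rewrite /wgroup /mgroup; repeat dec; try lia.

Section S.
Variables (h k : nat) (x y : 'I_k -> 'I_k -> bool).
Hypothesis hk : k <= h.
Hypothesis hd : DISJ x y.

Lemma wprefE i (m m' : 'I_(h+h)) : @wprefers k h x i m m' =
  (@wgroup k h x i m < @wgroup k h x i m') || (@wgroup k h x i m == @wgroup k h x i m') && (m < m').
Proof. by rewrite /wprefers /wkey key_cmp. Qed.
Lemma mprefE j (w w' : 'I_(h+h)) : @mprefers k h y j w w' =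
  (@mgroup k h y j w < @mgroup k h y j w') || (@mgroup k h y j w == @mgroup k h y j w') && (w < w').
Proof. by rewrite /mprefers /mkey key_cmp. Qed.


Lemma stable_mu1_pair (w w' m mw : 'I_(h+h)) :
  val mw = mu1 w -> val m = mu1 w' ->
  ~ (@wprefers k h x w m mw && @mprefers k h y m w w').
Proof.
move=> E1 E2; rewrite wprefE mprefE E1 E2 /mu1.
have := bitat_disj hd w (mu1 w'); rewrite /mu1.
case: w w' E1 E2 => w Hw [w' Hw'] /= E1 E2.
case: (ltnP w h) => H1; case: (ltnP w' h) => H2; crush.
Qed.

Lemma cross (w0 w2 m0 m2 : 'I_(h+h)) : h <= w0 -> h <= m0 -> w2 < h -> m2 < h ->
 @wprefers k h x w0 m2 m0 && @mprefers k h y m2 w0 w2 || @wprefers k h x w2 m0 m2 && @mprefers k h y m0 w2 w0.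
Proof.
move=> H1 H2 H3 H4; rewrite !wprefE !mprefE.
have := bitat_disj hd w2 m2; crush.
Qed.
End S.


Lemma memS h (w : 'I_(h+h)) : (w \in [set lshift h i | i in 'I_h]) = (w < h).
Proof.
apply/imsetP/idP => [[i _ ->] /=|H]; first exact: ltn_ord.
by exists (Ordinal H) => //; apply: val_inj.
Qed.

Lemma memL h (w : 'I_(h+h)) : (w \in [set rshift h i | i in 'I_h]) = (h <= w).
Proof.
apply/imsetP/idP => [[i _ ->] /=|H]; first exact: leq_addr.
have Hi : w - h < h by have := ltn_ord w; lia.
by exists (Ordinal Hi) => //; apply: val_inj => /=; lia.
Qed.

Lemma cardS h : #|[set lshift h i | i in 'I_h]| = h.
Proof. by rewrite card_imset ?card_ord //; exact: lshift_inj. Qed.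
Lemma cardL h : #|[set rshift h i | i in 'I_h]| = h.
Proof. by rewrite card_imset ?card_ord //; exact: rshift_inj. Qed.

Lemma full_image h (mu : 'I_(h+h) -> 'I_(h+h)) (A B : {set 'I_(h+h)}) :
  injective mu -> #|A| = #|B| -> {in A, forall w, mu w \in B} ->
  forall w, mu w \in B -> w \in A.
Proof.
move=> inj cAB sub w Hw.
have : mu @: A == B.
  rewrite eqEcard card_imset // cAB leqnn andbT.
  by apply/subsetP => m /imsetP [v Hv ->]; apply: sub.
move/eqP => E; move: Hw; rewrite -E => /imsetP [v Hv /inj ->] //.
Qed.

Theorem lemma16 (h k : nat) (hk : k <= h) (kpos : 0 < h -> 0 < k)
    (x y : 'I_k -> 'I_k -> bool) (hdisj : DISJ x y) :
  forall mu : 'I_(h + h) -> 'I_(h + h), injective mu ->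
    (@stable k h x y mu <-> (forall w, nat_of_ord (mu w) = mu1 w)).
Proof.
move=> mu inj; split; last first.
  move=> E w w'; apply: (stable_mu1_pair hk hdisj); exact: E.
move=> st.
have [g muK gK] := injF_bij inj.
have NLL : forall w : 'I_(h+h), h <= w -> mu w < h.
  move=> w0 Hw0; rewrite ltnNge; apply/negP => Hm0.
  case E: [exists w2 : 'I_(h+h), (w2 < h) && (mu w2 < h)].
    case/existsP: E => w2 /andP [Hw2 Hm2].
    case/orP: (cross hk hdisj Hw0 Hm0 Hw2 Hm2) => H.
      exact: (st w0 w2 H).
    exact: (st w2 w0 H).
  have all : {in [set lshift h i | i in 'I_h], forall w, mu w \in [set rshift h i | i in 'I_h]}.
    move=> w; rewrite memS memL => Hw; rewrite leqNgt; apply/negP => Hm.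
    by move/negbT/existsPn: E => /(_ w); rewrite Hw Hm.
  have := full_image inj (etrans (cardS h) (esym (cardL h))) all (w := w0).
  rewrite memS memL => /(_ Hm0); lia.
have C1 : forall w : 'I_(h+h), (h <= w) = (mu w < h).
  move=> w; apply/idP/idP; first exact: NLL.
  move=> Hm; apply: contraT; rewrite -ltnNge => Hw.
  have all : {in [set rshift h i | i in 'I_h], forall w, mu w \in [set lshift h i | i in 'I_h]}.
    by move=> v; rewrite memS memL; apply: NLL.
  have := full_image inj (etrans (cardL h) (esym (cardS h))) all (w := w).
  by rewrite memS memL => /(_ Hm); lia.
have A : forall i (w : 'I_(h+h)), val w = i -> i < h -> val (mu w) = i + h.
  elim/ltn_ind => i IH w Ew Hi.
  have Ew2 : nat_of_ord w = i := Ew.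
  have Hm : h <= mu w by have := C1 w; rewrite Ew; lia.
  apply/eqP; apply: contraT => Hne.
  have HM : i + h < h + h by lia.
  have Ew' : mu (g (Ordinal HM)) = Ordinal HM := gK _.
  move: Ew'; move: (g (Ordinal HM)) => w' Ew'.
  have Hw' : w' < h by have := C1 w'; rewrite Ew' /=; lia.
  have Hgt : i < w'.
    case: (ltngtP w' i) => c //.
      by have := IH _ c w' erefl Hw'; rewrite Ew' /=; lia.
    have eq : w' = w by apply: val_inj; rewrite /= c Ew.
    by exfalso; move/eqP: Hne; apply; rewrite -eq Ew'.
  have Hgt2 : i + h < mu w.
    case: (ltngtP (mu w) (i+h)) => c //; last by exfalso; move/eqP: Hne; apply; exact: c.
    have Hv : mu w - h < h + h by lia.
    have c' : val (Ordinal Hv) < i by rewrite /=; lia.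
    have := IH _ c' (Ordinal Hv) erefl (leq_trans c' (ltnW Hi)).
    rewrite /= subnK // => /val_inj /inj /(congr1 val) /=; lia.
  case: (st w w'); rewrite wprefE mprefE Ew' /=.
  rewrite /wgroup /mgroup; repeat dec; lia.
have B : forall i (w : 'I_(h+h)), val w = i + h -> val (mu w) = i.
  elim/ltn_ind => i IH w Ew.
  have Ew2 : nat_of_ord w = i + h := Ew.
  have Hi : i < h by have := ltn_ord w; lia.
  have Hm : mu w < h by have := C1 w; rewrite Ew; lia.
  apply/eqP; apply: contraT => Hne.
  have HM : i < h + h by lia.
  have Ew' : mu (g (Ordinal HM)) = Ordinal HM := gK _.
  move: Ew'; move: (g (Ordinal HM)) => w' Ew'.
  have Hw' : h <= w' by have := C1 w'; rewrite Ew' /=; lia.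
  have Hgt : i + h < w'.
    case: (ltngtP (w' - h) i) => c.
    - by have := IH _ c w' (esym (subnK Hw')); rewrite Ew' /=; lia.
    - lia.
    - have eq : w' = w by apply: val_inj; rewrite /= Ew; lia.
      by exfalso; move/eqP: Hne; apply; rewrite -eq Ew'.
  have Hgt2 : i < mu w.
    case: (ltngtP (mu w) i) => c //; last by exfalso; move/eqP: Hne; apply; exact: c.
    have Hv : mu w + h < h + h by lia.
    have := IH _ c (Ordinal Hv) erefl.
    rewrite /= => /val_inj /inj /(congr1 val) /=; lia.
  case: (st w w'); rewrite wprefE mprefE Ew' /=.
  rewrite /wgroup /mgroup; repeat dec; lia.
move=> w; rewrite /mu1; case: ifP => H.
  exact: A _ _ erefl H.
apply: B; change (nat_of_ord w = w - h + h); rewrite subnK //; by rewrite leqNgt H.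
Qed.
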